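(* Let $t$ be a positive integer, let $\overline{\mathcal{G}}_t$, $\overline{\mathcal{P}}_t$ and $\phi:\overline{\mathcal{G}}_t\to\overline{\mathcal{P}}_t$ be as described in the context, let $\pi\in\overline{\mathcal{G}}_t$ and $\mu=\phi(\pi)$. Then (i) $\ell(\pi)\le \ell(\mu)$; (ii) $\ell(\pi)\ge \ell(\mu)-m(\mu)+\delta_{\ell(\mu),m(\mu)}$, where $\delta$ is the Kronecker delta.
   Context: An overpartition is a partition (weakly decreasing sequence of positive integers) in which the first occurrence of each distinct part size may be overlined; an overlined part $\overline{a}$ has size $a$. $\ell(\lambda)$ is the number of parts of $\lambda$; for $\mu\in\overline{\mathcal{P}}_t$, $m(\mu)$ is the number of parts of $\mu$ equal to $t$. $\overline{\mathcal{G}}_t$ is the set of nonempty overpartitions whose largest and smallest parts differ by at most $t$, with the largest part not overlined whenever this difference is exactly $t$. $\overline{\mathcal{P}}_t$ is the set of nonempty overpartitions with all parts at most $t$ and no part equal to $t$ overlined. For $\pi=(\pi_1,\dots,\pi_\ell)\in\overline{\mathcal{G}}_t$, let $s=\lfloor \pi_\ell/t\rfloor$ and let $k$ be the positive integer with $\pi_k\ge (s+1)t>\pi_{k+1}$ if it exists, $k=0$ otherwise; then $\phi(\pi)$ is the overpartition $(t,\dots,t,\ \pi_{k+1}-st,\dots,\pi_\ell-st,\ \pi_1-(s+1)t,\dots,\pi_k-(s+1)t)$ with exactly $s(\ell-k)+(s+1)k$ initial non-overlined parts equal to $t$, where each $\pi_i-st$ or $\pi_i-(s+1)t$ is overlined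 exactly when $\pi_i$ is, and all parts equal to $0$ are deleted. (This $\phi(\pi)$ lies in $\overline{\mathcal{P}}_t$.) *)

(* Defs.v *)
From mathcomp Require Import all_boot.
Set Implicit Arguments. Unset Strict Implicit. Unset Printing Implicit Defensive.

(* An overpartition is a list of parts (size, overlined?), listed in weakly
   decreasing order of size.  An overlined part must be the first occurrence
   of its size, i.e. the preceding part (if any) is strictly larger. *)
Definition opart := (nat * bool)%type.
Definition overpartition := seq opart.

Definition op_step (a b : opart) : bool :=
  (b.1 <= a.1) && (b.2 ==> (b.1 < a.1)).

Definition is_overpartition (p : overpartition) : bool :=
  all (fun x => 0 < x.1) p && sorted op_step p.

Definition ell (p : overpartition) : nat := size p.

Definition largest (p : overpartition) : nat := (head (0, false) p).1.
Definition smallest (p : overpartition) : nat := (last (0, false) p).1.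

Definition in_Gt (t : nat) (p : overpartition) : bool :=
  [&& is_overpartition p, p != [::],
      largest p - smallest p <= t &
      (largest p - smallest p == t) ==> ~~ (head (0, false) p).2].

Definition in_Pt (t : nat) (p : overpartition) : bool :=
  [&& is_overpartition p, p != [::] &
      all (fun x => (x.1 <= t) && ((x.1 == t) ==> ~~ x.2)) p].

Definition mult_t (t : nat) (p : overpartition) : nat :=
  count (fun x => x.1 == t) p.

(* The map phi.  s = floor(pi_l / t); k = number of parts >= (s+1) t
   (since pi is weakly decreasing and pi_l < (s+1)t, this is the unique
   k with pi_k >= (s+1)t > pi_{k+1}, or 0 if there is none). *)
Definition phi (t : nat) (p : overpartition) : overpartition :=
  let l := size p in
  let s := smallest p %/ t in
  let k := count (fun x => (s.+1 * t) <= x.1) p in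
  let big := take k p in
  let rest := drop k p in
  filter (fun x => 0 < x.1)
    (nseq (s * (l - k) + s.+1 * k) (t, false)
     ++ [seq (x.1 - s * t, x.2) | x <- rest]
     ++ [seq (x.1 - s.+1 * t, x.2) | x <- big]).

(* Main.v *)
Require Import Defs.
From mathcomp Require Import all_boot.
From mathcomp Require Import zify.

Theorem mainTheorem3 (t : nat) (pi : overpartition) :
  0 < t -> in_Gt t pi ->
  let mu := phi t pi in
  ell pi <= ell mu /\
  ell mu - mult_t t mu + (ell mu == mult_t t mu) <= ell pi.
Proof.
move=> t0 /and4P[/andP[Hpos _] Hne _ _] /=.
rewrite /ell /mult_t /phi.
set s := smallest pi %/ t.
set k := count _ pi.
set N := s * (size pi - k) + s.+1 * k.
set B := [seq (x.1 - s * t, x.2) | x <- drop k pi].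
set C := [seq (x.1 - s.+1 * t, x.2) | x <- take k pi].
have hk : k <= size pi by apply: count_size.
have hl : 0 < size pi by case: pi Hne {Hpos s k N B C hk}.
rewrite size_filter count_filter !count_cat.
have -> : count (fun x : opart => 0 < x.1) (nseq N (t, false)) = N.
  by rewrite count_nseq /= t0 mul1n.
have -> : count (predI (fun x : opart => x.1 == t) (fun x : opart => 0 < x.1))
    (nseq N (t, false)) = N.
  by rewrite count_nseq /= eqxx t0 mul1n.
set z := count _ B + count _ C.
set c := count _ B + count _ C.
have hcz : c <= z.
  by rewrite /c /z leq_add // sub_count // => x /andP[].
have hz : z <= size pi.
  have hBC : size B + size C = size pi.
    rewrite /B /C !size_map size_take size_drop.
    case: ltnP => h; first exact: subnK.
    by move: h; rewrite -subn_eq0 => /eqP ->.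

  by rewrite -hBC /z leq_add // count_size.
split.
  case: (posnP s) => [s0|sp].
    have : count (fun x : opart => 0 < x.1) B = size pi - k.
      rewrite /B count_map s0 mul0n.
      have -> : count (preim (fun x : opart => (x.1 - 0, x.2)) (fun x => 0 < x.1)) (drop k pi)
           = size (drop k pi).
        apply/eqP; rewrite -all_count; apply/allP => x /mem_drop Hx.
        by rewrite /= subn0; exact: (allP Hpos x Hx).
      by rewrite size_drop.
    rewrite /z /N s0 => ->; rewrite mul0n mul1n add0n addnA (subnKC hk); exact: leq_addr.
  rewrite /N. nia.
have -> : (N + z == N + c) = (z == c) by rewrite eqn_add2l.
case: eqP => [->|]; lia.
Qed.
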